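(* Let $A$ be an infinite set, $\mathcal{L}\in V(\Omega(A))$, and $I,J,K$ sets. If $f:A^{I}\to A^{J}$ and $g:A^{J}\to A^{K}$ are uniformly continuous, then $\overline{g}^{\mathcal{L}}\circ\overline{f}^{\mathcal{L}}=\overline{g\circ f}^{\mathcal{L}}$ as maps $\mathcal{L}^{I}\to\mathcal{L}^{K}$.
   Context: For each $a\in A$ let $\hat{a}$ be a constant symbol, and for each $n\geq1$ and each $h:A^{n}\to A$ let $\hat{h}$ be an $n$-ary operation symbol. $\Omega(A)$ is the algebra with universe $A$ interpreting $\hat{a}$ as $a$ and $\hat{h}$ as $h$; $V(\Omega(A))$ is the variety it generates. Partitions: for $h:X\to Y$, $\Pi(h)$ is the partition of $X$ into nonempty fibers, and for a partition $P$ of $Y$, $[h]_{-1}(P)=\{h^{-1}(R):R\in P\}\setminus\{\emptyset\}$. For $i_{1},\dots,i_{n}\in I$, $\mathcal{P}_{i_{1},\dots,i_{n}}$ is the partition of $A^{I}$ with $u,v$ in the same block iff $u(i_{k})=v(i_{k})$ for all $k$; $\mathcal{P}(A,I)$ is the filter of partitions of $A^{I}$ coarser than some $\mathcal{P}_{i_{1},\dots,i_{n}}$. $\mathbf{F}(A,I)=\{h\in A^{A^{I}}:\Pi(h)\in\mathcal{P}(A,I)\}$, a subalgebra of $\Omega(A)^{A^{I}}$, freely generated in $V(\Omega(A))$ by the projections $\pi_{i}(u)=u(i)$; every $h\in\mathbf{F}(A,I)$ can be written $h=\hat{r}^{\mathbf{F}(A,I)}(\pi_{i_{1}},\dots,\pi_{i_{n}})$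 for some $r:A^{n}\to A$ and $i_{1},\dots,i_{n}\in I$. Uniform continuity: $h:X\to Y$ with $X,Y$ carrying filters of partitions $F,G$ is uniformly continuous if $[h]_{-1}(P)\in F$ for all $P\in G$; $A^{I}$ carries $\mathcal{P}(A,I)$ and $A$ carries all partitions of $A$ (so uniformly continuous maps $A^{I}\to A$ are exactly the elements of $\mathbf{F}(A,I)$). For $h=\hat{r}^{\mathbf{F}(A,I)}(\pi_{i_{1}},\dots,\pi_{i_{n}})\in\mathbf{F}(A,I)$, define $\overline{h}^{\mathcal{L}}:\mathcal{L}^{I}\to\mathcal{L}$ by $\overline{h}^{\mathcal{L}}((\ell_{i})_{i\in I})=\hat{r}^{\mathcal{L}}(\ell_{i_{1}},\dots,\ell_{i_{n}})$ (this is well defined). For uniformly continuous $f:A^{I}\to A^{J}$, define $\overline{f}^{\mathcal{L}}:\mathcal{L}^{I}\to\mathcal{L}^{J}$ by $\overline{f}^{\mathcal{L}}(\alpha)=(\overline{\pi_{j}\circ f}^{\mathcal{L}}(\alpha))_{j\in J}$. *)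

(* Defs.v *)
From mathcomp Require Import all_boot.
From Stdlib Require Import ClassicalEpsilon.
Unset Printing Implicit Defensive.

Definition infinite (A : Type) : Prop :=
  ~ exists s : list A, forall a : A, List.In a s.

Lemma infinite_inhabited (A : Type) : infinite A -> inhabited A.
Proof.
move=> hA; case: (classic (inhabited A)) => // hn; exfalso; apply: hA.
by exists nil => a; apply: hn; constructor.
Qed.

(** Algebras of the signature of Omega(A): a constant symbol for each a : A
    and an n-ary operation symbol for each h : A^n -> A, n >= 1
    (we write the arity as n.+1, n : nat, and A^m as 'I_m -> A). *)
Record omega_alg (A : Type) := OmegaAlg {
  carrier :> Type;
  cst : A -> carrier;
  op : forall n : nat, (('I_n.+1 -> A) -> A) -> ('I_n.+1 -> carrier) -> carrier
}.

Definition Omega (A : Type) : omega_alg A :=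
  OmegaAlg A A (fun a => a) (fun n h x => h x).

Inductive term (A : Type) : Type :=
| Var : nat -> term A
| Cst : A -> term A
| Op : forall n : nat, (('I_n.+1 -> A) -> A) -> ('I_n.+1 -> term A) -> term A.

Fixpoint eval (A : Type) (L : omega_alg A) (v : nat -> L) (t : term A) : L :=
  match t with
  | Var k => v k
  | Cst a => cst A L a
  | Op n h args => op A L n h (fun i => eval A L v (args i))
  end.

(** L belongs to the variety V(Omega(A)) generated by Omega(A):
    L satisfies every identity satisfied by Omega(A) (Birkhoff). *)
Definition in_variety (A : Type) (L : omega_alg A) : Prop :=
  forall s t : term A,
    (forall v : nat -> A, eval A (Omega A) v s = eval A (Omega A) v t) ->
    forall w : nat -> L, eval A L w s = eval A L w t.

(** Partitions of X are represented by their equivalence relations. *)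
Definition is_equiv (X : Type) (R : X -> X -> Prop) : Prop :=
  (forall x, R x x) /\ (forall x y, R x y -> R y x) /\
  (forall x y z, R x y -> R y z -> R x z).

(** The filter P(A,I) of partitions of A^I coarser than some P_{i1,...,in}. *)
Definition PAI (A I : Type) (R : (I -> A) -> (I -> A) -> Prop) : Prop :=
  is_equiv (I -> A) R /\
  exists s : list I, forall u v : I -> A,
      (forall i, List.In i s -> u i = v i) -> R u v.

(** Uniform continuity of f : A^I -> A^J, where A^I, A^J carry P(A,I), P(A,J);
    [f]_{-1}(P) corresponds to the relation (u,v) |-> R (f u) (f v). *)
Definition unif_cont (A I J : Type) (f : (I -> A) -> (J -> A)) : Prop :=
  forall R, PAI A J R -> PAI A I (fun u v => R (f u) (f v)).

(** Representations h = r^(pi_{i1},...,pi_{in}) of h : A^I -> A.  An arity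
    n = 0 stands for the constant symbol r() (only needed when I is empty). *)
Record rep (A I : Type) := Rep {
  rn : nat;
  rf : ('I_rn -> A) -> A;
  ridx : 'I_rn -> I
}.

Definition represents (A I : Type) (h : (I -> A) -> A) (r : rep A I) : Prop :=
  forall u : I -> A, h u = rf A I r (fun k => u (ridx A I r k)).

Lemma ord0_False (k : 'I_0) : False.
Proof. by case: k. Qed.

Definition I0_elim (T : Type) (k : 'I_0) : T := False_rect T (ord0_False k).

Definition applyL (A : Type) (L : omega_alg A) (n : nat) :
    (('I_n -> A) -> A) -> ('I_n -> L) -> L :=
  match n with
  | 0 => fun r _ => cst A L (r (I0_elim A))
  | m.+1 => fun r x => op A L m r x
  end.

Definition applyRep (A I : Type) (L : omega_alg A) (r : rep A I) (l : I -> L) : L :=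
  applyL A L (rn A I r) (rf A I r) (fun k => l (ridx A I r k)).

Definition rep_inhabited (A I : Type) (HA : inhabited A) : inhabited (rep A I) :=
  match HA with inhabits a => inhabits (Rep A I 0 (fun _ => a) (I0_elim I)) end.

(** A chosen representation of h (meaningful when h is in F(A,I)). *)
Definition chosen_rep (A I : Type) (HA : inhabited A) (h : (I -> A) -> A) : rep A I :=
  epsilon (rep_inhabited A I HA) (represents A I h).

Definition hbar (A I : Type) (HA : inhabited A) (L : omega_alg A)
    (h : (I -> A) -> A) (l : I -> L) : L :=
  applyRep A I L (chosen_rep A I HA h) l.

Definition fbar (A I J : Type) (HA : inhabited A) (L : omega_alg A)
    (f : (I -> A) -> (J -> A)) (alpha : I -> L) : J -> L :=
  fun j => hbar A I HA L (fun u => f u j) alpha.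

(* Main.v *)
Require Import Defs.
From mathcomp Require Import all_boot.
From Stdlib Require Import ClassicalEpsilon FunctionalExtensionality.

Lemma mem_In (T : eqType) (x : T) (s : seq T) : x \in s -> List.In x s.
Proof.
elim: s => //= y s IH; rewrite in_cons => /orP [/eqP ->|h]; [by left|by right; apply: IH].
Qed.

Lemma In_ord (n : nat) (t : 'I_n) : List.In t (ord_enum n).
Proof. apply: mem_In; exact: mem_ord_enum. Qed.

Section S.
Variable A : Type.

Fixpoint pos {I : Type} (s : list I) (i : I) : nat :=
  match s with
  | nil => 0
  | x :: s' => if excluded_middle_informative (x = i) then 0 else (pos s' i).+1
  end.

Lemma pos_nth_error (I : Type) (s : list I) (i : I) :
  List.In i s -> List.nth_error s (pos s i) = Some i.
Proof.
elim: s => //= x s IH [->|h].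
  by case: excluded_middle_informative.
case: excluded_middle_informative => [e|_] /=; [by rewrite e|exact: IH].
Qed.

Lemma pos_lt (I : Type) (s : list I) (i : I) :
  List.In i s -> pos s i < size s.
Proof.
elim: s => //= x s IH [->|h].
  by case: excluded_middle_informative.
case: excluded_middle_informative => //= _; exact: IH.
Qed.

Lemma pos_nth (I : Type) (s : list I) (i d : I) :
  List.In i s -> nth d s (pos s i) = i.
Proof.
elim: s => //= x s IH [->|h].
  by case: excluded_middle_informative.
case: excluded_middle_informative => [e|_] /=; [by rewrite e|exact: IH].
Qed.

Definition mkT (n : nat) : (('I_n -> A) -> A) -> ('I_n -> term A) -> term A :=
  match n with
  | 0 => fun r _ => Cst A (r (I0_elim A))
  | m.+1 => fun r x => Op A m r x
  end.

Lemma eval_mkT (L : omega_alg A) w n r x :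
  eval A L w (mkT n r x) = applyL A L n r (fun k => eval A L w (x k)).
Proof. by case: n r x. Qed.

Lemma applyL_Omega n r (y : 'I_n -> A) : applyL A (Omega A) n r y = r y.
Proof.
case: n r y => //= r y; congr r; apply: functional_extensionality => k.
by case: (ord0_False k).
Qed.

Lemma rep_exists (I : Type) (HA : inhabited A) (h : (I -> A) -> A) :
  (exists s : list I, forall u v : I -> A,
      (forall i, List.In i s -> u i = v i) -> h u = h v) ->
  exists r, represents A I h r.
Proof.
case: HA => a0 [s hs].
pose ux (x : 'I_(size s) -> A) (i : I) :=
  match insub (pos s i) with Some k => x k | None => a0 end.
exists (Rep A I (size s) (fun x => h (ux x)) (tnth (in_tuple s))) => u /=.
apply: hs => i hi; rewrite /ux insubT; first exact: pos_lt.
move=> lt; rewrite (tnth_nth i) /=; by rewrite pos_nth.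
Qed.

Lemma chosen_ok (I : Type) (HA : inhabited A) (h : (I -> A) -> A) :
  (exists r, represents A I h r) -> represents A I h (chosen_rep A I HA h).
Proof. move=> e; rewrite /chosen_rep; exact: epsilon_spec. Qed.

Lemma uc_rep (I J : Type) (HA : inhabited A) (f : (I -> A) -> (J -> A)) j :
  unif_cont A I J f ->
  represents A I (fun u => f u j) (chosen_rep A I HA (fun u => f u j)).
Proof.
move=> uc; apply: chosen_ok; apply: rep_exists => //.
have hP : PAI A J (fun v w => v j = w j).
  split; first by split; [|split]; [|move=> x y ->|move=> x y z -> ->].
  by exists [:: j] => u v h; apply: h; left.
have [_ [s hs]] := uc _ hP.
by exists s.
Qed.

Lemma uc_comp (I J K : Type) f g :
  unif_cont A I J f -> unif_cont A J K g -> unif_cont A I K (fun u => g (f u)).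
Proof. by move=> uf ug R hR; exact: (uf _ (ug R hR)). Qed.

Definition lst {I : Type} (q : rep A I) : list I :=
  List.map (ridx A I q) (ord_enum (rn A I q)).

Lemma In_lst (I : Type) (q : rep A I) t : List.In (ridx A I q t) (lst q).
Proof. rewrite /lst; apply: (List.in_map (ridx A I q)); exact: In_ord. Qed.

Lemma key (I J : Type) (HA : inhabited A) (L : omega_alg A) (hL : in_variety A L)
  (r : rep A J) (R : J -> rep A I) (r' : rep A I)
  (G : (J -> A) -> A) (Fj : J -> (I -> A) -> A) (H : (I -> A) -> A) :
  represents A J G r -> (forall j, represents A I (Fj j) (R j)) ->
  represents A I H r' -> (forall u, H u = G (fun j => Fj j u)) ->
  forall alpha : I -> L,
  applyRep A J L r (fun j => applyRep A I L (R j) alpha) = applyRep A I L r' alpha.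
Proof.
move=> hG hF hH hc alpha; case: HA => a0.
pose s := lst r' ++ List.concat (List.map (fun k' => lst (R (ridx A J r k')))
                                    (ord_enum (rn A J r))).
pose tL := mkT (rn A J r) (rf A J r) (fun k' =>
   mkT (rn A I (R (ridx A J r k'))) (rf A I (R (ridx A J r k')))
     (fun t => Var A (pos s (ridx A I (R (ridx A J r k')) t)))).
pose tR := mkT (rn A I r') (rf A I r') (fun t => Var A (pos s (ridx A I r' t))).
pose w (n : nat) : L := match List.nth_error s n with Some i => alpha i | None => cst A L a0 end.
have hw : forall i, List.In i s -> w (pos s i) = alpha i.
  by move=> i hi; rewrite /w pos_nth_error.
have hid : forall v, eval A (Omega A) v tL = eval A (Omega A) v tR.
  move=> v.
pose u (i : I) := v (pos s i).
have -> : eval A (Omega A) v tR = H u.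
  by rewrite /tR eval_mkT applyL_Omega hH.
rewrite hc hG /tL eval_mkT applyL_Omega; congr (rf A J r).
apply: functional_extensionality => k'.
by rewrite eval_mkT applyL_Omega hF.
have e := hL tL tR hid w.
have e1 : eval A L w tL = applyRep A J L r (fun j => applyRep A I L (R j) alpha).
  rewrite /tL eval_mkT /applyRep; congr applyL; apply: functional_extensionality => k'.
  rewrite eval_mkT; congr applyL; apply: functional_extensionality => t /=.
  apply: hw; apply: List.in_or_app; right; apply/List.in_concat.
  exists (lst (R (ridx A J r k'))); split; last exact: In_lst.
  apply: (List.in_map (fun k' => lst (R (ridx A J r k')))); exact: In_ord.
have e2 : eval A L w tR = applyRep A I L r' alpha.
  rewrite /tR eval_mkT /applyRep; congr applyL; apply: functional_extensionality => t /=.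
  apply: hw; apply: List.in_or_app; left; exact: In_lst.
by rewrite -e1 -e2.
Qed.

End S.

Theorem mainTheorem6 (A : Type) (hA : infinite A) (L : omega_alg A)
    (hL : in_variety A L) (I J K : Type)
    (f : (I -> A) -> (J -> A)) (g : (J -> A) -> (K -> A)) :
  unif_cont A I J f -> unif_cont A J K g ->
  (fun alpha : I -> L =>
     fbar A J K (infinite_inhabited A hA) L g
       (fbar A I J (infinite_inhabited A hA) L f alpha))
  = fbar A I K (infinite_inhabited A hA) L (fun u => g (f u)).
Proof.
move=> uf ug; apply: functional_extensionality => alpha.
apply: functional_extensionality => k.
rewrite /fbar /hbar.
set HA := infinite_inhabited A hA.
have := (@key A I J HA L hL _ _ _ _ _ _ (uc_rep A J K HA g k ug) (fun j => uc_rep A I J HA f j uf)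
          (uc_rep A I K HA (fun u => g (f u)) k (uc_comp A I J K f g uf ug)) (fun u => erefl) alpha).
move=> h.
exact: h.
Qed.
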